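(* Let $M$ be a combinational Boolean circuit with set of internal variables $X$, set of input variables $V$ and set of output variables $W$, and let $F(X,V,W)$ be a CNF formula specifying $M$. Let $B(W)$ be a clause over variables of $W$, let $C \in F$ be a clause, and let $H(V)$ be a CNF formula over variables of $V$ such that $$\exists X\,\exists W\,[F \wedge B] \;\equiv\; H \wedge \exists X\,\exists W\,[(F \setminus \{C\}) \wedge B].$$ Let $Q(V)$ be a clause of $H$. Then for every full assignment $\mathbf{v}$ to $V$ that falsifies $Q$, the output assignment $\mathbf{w}$ produced by $M$ on input $\mathbf{v}$ falsifies the clause $B$.
   Context: A CNF formula is identified with the set of its clauses, so $F\setminus\{C\}$ is $F$ with clause $C$ removed. $F$ specifies $M$ means $F = F_{G_1}\wedge\dots\wedge F_{G_k}$, where $G_1,\dots,G_k$ are the gates of $M$ and $F_{G_i}$ is the standard (Tseitin) CNF encoding of gate $G_i$, so that the assignments to $X\cup V\cup W$ satisfying $F$ are exactly the consistent assignments to all gates of $M$, i.e., exactly the execution traces $(\mathbf{x},\mathbf{v},\mathbf{w})$ of $M$ (for each input $\mathbf{v}$ there is exactly one such trace). Two formulas possibly containing existential quantifiers are equivalent ($\equiv$) if they evaluate to the same value under every full assignment to their free variables. *)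

(* Defs.v *)
From mathcomp Require Import all_boot.
Set Implicit Arguments. Unset Strict Implicit. Unset Printing Implicit Defensive.

Definition var := nat.
Definition assignment := var -> bool.

(** A literal (x, b) is satisfied by [a] iff [a x = b]: (x,true) is x, (x,false) is ~x. *)
Definition literal := (var * bool)%type.
Definition clause := seq literal.
(** A CNF formula, identified with the set of its clauses. *)
Definition cnf := seq clause.

Definition lit_sat (a : assignment) (l : literal) : bool := a l.1 == l.2.
Definition clause_sat (a : assignment) (C : clause) : bool := has (lit_sat a) C.
Definition cnf_sat (a : assignment) (F : cnf) : bool := all (clause_sat a) F.

Definition clause_vars (C : clause) : seq var := map fst C.
Definition cnf_vars (F : cnf) : seq var := flatten (map clause_vars F).

Definition cnf_remove (F : cnf) (C : clause) : cnf := filter (predC1 C) F.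

(** [exists Y, phi] evaluated at the full assignment [a]: some assignment
    agreeing with [a] outside Y satisfies phi. *)
Definition ex_sat (Y : seq var) (phi : cnf) (a : assignment) : Prop :=
  exists a' : assignment, (forall x, x \notin Y -> a' x = a x) /\ cnf_sat a' phi.

Record gate := Gate { g_out : var; g_ins : seq var; g_fun : seq bool -> bool }.

Definition gate_consistent (a : assignment) (G : gate) : bool :=
  a (g_out G) == g_fun G (map a (g_ins G)).

(** A combinational circuit: internal vars X, inputs V, outputs W, and gates
    listed in topological order. *)
Record circuit := Circuit {
  c_X : seq var; c_V : seq var; c_W : seq var; c_gates : seq gate }.

Definition gate_outs (M : circuit) : seq var := map g_out (c_gates M).

Definition circuit_wf (M : circuit) : Prop :=
  [/\ uniq (gate_outs M),
      (forall x, x \in gate_outs M = (x \in c_X M) || (x \in c_W M)),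
      (forall x, x \in c_V M -> (x \notin c_X M) && (x \notin c_W M)),
      (forall x, x \in c_X M -> x \notin c_W M) &
      (forall i, i < size (c_gates M) ->
        forall y, y \in g_ins (nth (Gate 0 [::] (fun _ => false)) (c_gates M) i) ->
          (y \in c_V M) || (y \in take i (gate_outs M)))].

(** Simulation of the circuit: evaluate gates in order, starting from
    the assignment [v] (whose values on V are the inputs). *)
Definition update (a : assignment) (x : var) (b : bool) : assignment :=
  fun y => if y == x then b else a y.

Definition eval_gate (a : assignment) (G : gate) : assignment :=
  update a (g_out G) (g_fun G (map a (g_ins G))).

(** The execution trace (x, v, w) of M on input v (values on X, V, W). *)
Definition run (M : circuit) (v : assignment) : assignment :=
  foldl eval_gate v (c_gates M).

Definition encodes_gate (G : gate) (FG : cnf) : Prop :=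
  {subset cnf_vars FG <= g_out G :: g_ins G} /\
  (forall a : assignment, cnf_sat a FG = gate_consistent a G).

Definition specifies (F : cnf) (M : circuit) : Prop :=
  exists FGs : seq cnf,
    size FGs = size (c_gates M) /\
    (forall i, i < size FGs -> encodes_gate (nth (Gate 0 [::] (fun _ => false)) (c_gates M) i)
                                            (nth [::] FGs i)) /\
    F =i flatten FGs.

(* Main.v *)
Require Import Defs.
From mathcomp Require Import all_boot.

Lemma fold_notin (gs : seq gate) (a : assignment) x :
  x \notin map g_out gs -> foldl eval_gate a gs x = a x.
Proof.
elim: gs a => [|g gs IH] a //=.
rewrite in_cons negb_or => /andP[ne nin].
rewrite IH // /eval_gate /update (negbTE ne) //.
Qed.

Lemma run_consistent (M : circuit) (v : assignment) i :
  circuit_wf M -> i < size (c_gates M) ->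
  gate_consistent (run M v) (nth (Gate 0 [::] (fun _ => false)) (c_gates M) i).
Proof.
case=> U Hout HV _ Hins ilt.
set gs := c_gates M.
set G := nth _ gs i.
have key : forall k x, x \notin map g_out (drop k gs) ->
    run M v x = foldl eval_gate v (take k gs) x.
  move=> k x nin; rewrite /run -/gs.
  by rewrite -{1}(cat_take_drop k gs) foldl_cat fold_notin.
have Ui : uniq (drop i (gate_outs M)) by apply: drop_uniq.
have Ed : drop i (gate_outs M) = g_out G :: drop i.+1 (gate_outs M).
  rewrite (drop_nth (g_out (Gate 0 [::] (fun _ => false)))); last by rewrite size_map.
  by rewrite /gate_outs (nth_map (Gate 0 [::] (fun _ => false))).
have Hsplit : take i.+1 gs = rcons (take i gs) G.
  by rewrite (take_nth (Gate 0 [::] (fun _ => false))).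
rewrite /gate_consistent.
have E1 : run M v (g_out G) = g_fun G (map (foldl eval_gate v (take i gs)) (g_ins G)).
  rewrite (key i.+1); last first.
    move: Ui; rewrite Ed /= => /andP[nin _].
    by rewrite map_drop.
  by rewrite Hsplit foldl_rcons /eval_gate /update eqxx.
rewrite E1; apply/eqP; congr (g_fun G _).
apply/eq_in_map => y yin.
rewrite (key i) // map_drop.
case/orP: (Hins i ilt y yin) => [yV|yT].
  apply/negP => yd; have := mem_drop yd.
  rewrite Hout; move: (HV y yV) => /andP[/negbTE -> /negbTE ->] //.
move: U; rewrite -(cat_take_drop i (gate_outs M)) cat_uniq => /and3P[_ /hasPn h _].
apply/negP => yd; have := h y yd; by rewrite yT.
Qed.

Theorem proposition3 (M : circuit) (F : cnf) (B : clause) (C : clause) (H : cnf)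
  (Q : clause) :
  circuit_wf M ->
  specifies F M ->
  {subset clause_vars B <= c_W M} ->
  C \in F ->
  {subset cnf_vars H <= c_V M} ->
  (forall a : assignment,
     ex_sat (c_X M ++ c_W M) (B :: F) a <->
     cnf_sat a H /\ ex_sat (c_X M ++ c_W M) (B :: cnf_remove F C) a) ->
  Q \in H ->
  forall v : assignment, ~~ clause_sat v Q -> ~~ clause_sat (run M v) B.
Proof.
move=> wf [FGs [Hsz [Henc HF]]] _ _ HH Heq QH v nQ.
apply/negP => sB.
have satF : cnf_sat (run M v) F.
  apply/allP => c; rewrite HF => /flattenP[FG FGin cin].
  have ilt : index FG FGs < size FGs by rewrite index_mem.
  have := Henc _ ilt => -[_ enc].
  have ilt' := ilt; rewrite Hsz in ilt'.
  have := @run_consistent M v _ wf ilt'.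
  rewrite -enc nth_index // => /allP /(_ c cin) //.
have exs : ex_sat (c_X M ++ c_W M) (B :: F) (run M v).
  by exists (run M v); split => //=; rewrite sB satF.
have [satH _] := (Heq (run M v)).1 exs.
have := allP satH Q QH.
have agree : forall x, x \in c_V M -> run M v x = v x.
  case: wf => _ Hout HV _ _ x xV; rewrite /run fold_notin //.
  rewrite -/(gate_outs M) Hout; move: (HV x xV) => /andP[/negbTE -> /negbTE ->] //.
move/hasP => [l lQ lsat]; move/hasP: nQ; apply; exists l => //.
move: lsat; rewrite /lit_sat agree //; apply: HH.
apply/flattenP; exists (clause_vars Q); first by apply/mapP; exists Q.
by apply/mapP; exists l.
Qed.
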